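(* Let $\Phi=\{\phi_j\}$ be a $\Phi$-sequence, $\nu$ a modulus of variation, and $1\le p<\infty$. Then $\Phi\mathrm{BV}\subseteq V_p[\nu]$ (as classes of functions on $[0,1]$) if and only if $$\limsup_{n\to\infty}\frac{1}{\nu(n)}\max_{1\le k\le n}k^{1/p}\,\Phi_k^{-1}(1)<\infty.$$
   Context: A $\Phi$-sequence is a sequence $\{\phi_j\}_{j\ge1}$ of increasing convex functions on $[0,\infty)$ with $\phi_j(0)=0$, $0<\phi_{j+1}(x)\le\phi_j(x)$ for all $j$ and $x>0$, and $\sum_j\phi_j(x)=\infty$ for $x>0$. $\Phi_n=\sum_{j=1}^n\phi_j$ and $\Phi_n^{-1}$ is its inverse function. $\mathrm{Var}_\Phi(f)=\sup\sum_{j=1}^n\phi_j(|f(I_j)|)$ over all finite collections $\{I_j\}$ of nonoverlapping subintervals of $[0,1]$, with $f(I)=f(\sup I)-f(\inf I)$; $\Phi\mathrm{BV}$ is the set of $f$ such that $\mathrm{Var}_\Phi(cf)<\infty$ for some $c>0$. A modulus of variation is a nondecreasing concave sequence of positive numbers $\nu(1),\nu(2),\dots$. $\upsilon_p(n,f)=\sup(\sum_{j=1}^n|f(I_j)|^p)^{1/p}$ over $n$ nonoverlapping subintervals of $[0,1]$, and $V_p[\nu]$ is the set of bounded $f$ on $[0,1]$ with $\sup_n\upsilon_p(n,f)/\nu(n)<\infty$. *)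

(* Defs.v *)
From Stdlib Require Import Reals List ClassicalEpsilon.
From Coquelicot Require Import Coquelicot.
Open Scope R_scope.

(* x^p for x >= 0, p > 0, with the convention 0^p = 0
   (Stdlib's Rpower 0 p is 1, hence this wrapper). *)
Definition rpow (x p : R) : R :=
  if Req_EM_T x 0 then 0 else Rpower x p.

(* A sequence phi_1, phi_2, ... is represented by phi : nat -> R -> R,
   using indices j >= 1 (phi 0 is unused). *)
Definition convex_on_nonneg (g : R -> R) : Prop :=
  forall x y t, 0 <= x -> 0 <= y -> 0 <= t <= 1 ->
    g (t * x + (1 - t) * y) <= t * g x + (1 - t) * g y.

Definition nondecr_on_nonneg (g : R -> R) : Prop :=
  forall x y, 0 <= x -> x <= y -> g x <= g y.

Fixpoint PhiSum (phi : nat -> R -> R) (n : nat) (x : R) : R :=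
  match n with
  | O => 0
  | S m => PhiSum phi m x + phi (S m) x
  end.

Definition is_Phi_sequence (phi : nat -> R -> R) : Prop :=
  (forall j, (1 <= j)%nat ->
      nondecr_on_nonneg (phi j) /\ convex_on_nonneg (phi j) /\ phi j 0 = 0) /\
  (forall j x, (1 <= j)%nat -> 0 < x -> 0 < phi (S j) x <= phi j x) /\
  (forall x, 0 < x -> 0 < phi 1%nat x) /\
  (forall x, 0 < x -> forall M, exists n, M < PhiSum phi n x).

Definition PhiInv (phi : nat -> R -> R) (n : nat) (y : R) : R :=
  epsilon (inhabits 0) (fun x => 0 <= x /\ PhiSum phi n x = y).

(* A finite collection of intervals I_1,...,I_m of [0,1] is a list of
   endpoint pairs (inf I_j, sup I_j). *)
Definition interval_in01 (ab : R * R) : Prop :=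
  0 <= fst ab /\ fst ab <= snd ab /\ snd ab <= 1.

Definition nonoverlap (ab cd : R * R) : Prop :=
  snd ab <= fst cd \/ snd cd <= fst ab.

Definition nonoverlapping (I : list (R * R)) : Prop :=
  List.Forall interval_in01 I /\
  forall i j, (i < length I)%nat -> (j < length I)%nat -> i <> j ->
    nonoverlap (nth i I (0, 0)) (nth j I (0, 0)).

Definition incr (f : R -> R) (ab : R * R) : R := f (snd ab) - f (fst ab).

Fixpoint PhiVarSum (phi : nat -> R -> R) (f : R -> R) (j0 : nat)
    (I : list (R * R)) : R :=
  match I with
  | nil => 0
  | ab :: I' => phi j0 (Rabs (incr f ab)) + PhiVarSum phi f (S j0) I'
  end.

Definition finite_PhiVar (phi : nat -> R -> R) (f : R -> R) : Prop :=
  exists M, forall I, nonoverlapping I -> PhiVarSum phi f 1 I <= M.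

Definition PhiBV (phi : nat -> R -> R) (f : R -> R) : Prop :=
  exists c, 0 < c /\ finite_PhiVar phi (fun x => c * f x).

Definition modulus_of_variation (nu : nat -> R) : Prop :=
  (forall n, (1 <= n)%nat -> 0 < nu n) /\
  (forall n, (1 <= n)%nat -> nu n <= nu (S n)) /\
  (forall n, (2 <= n)%nat -> nu (S n) + nu (pred n) <= 2 * nu n).

Definition pSum (p : R) (f : R -> R) (I : list (R * R)) : R :=
  rpow (fold_right Rplus 0 (map (fun ab => rpow (Rabs (incr f ab)) p) I)) (1 / p).

Definition bounded01 (f : R -> R) : Prop :=
  exists B, forall x, 0 <= x <= 1 -> Rabs (f x) <= B.

Definition Vp (p : R) (nu : nat -> R) (f : R -> R) : Prop :=
  bounded01 f /\
  exists M, forall n, (1 <= n)%nat -> forall I, nonoverlapping I ->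
    length I = n -> pSum p f I / nu n <= M.

Definition maxterm (phi : nat -> R -> R) (p : R) (n : nat) : R :=
  fold_right Rmax 0
    (map (fun k => Rpower (INR k) (1 / p) * PhiInv phi k 1) (seq 1 n)).

Definition crit_seq (phi : nat -> R -> R) (p : R) (nu : nat -> R) (n : nat) : R :=
  / nu n * maxterm phi p n.

(* Main.v *)
Require Import Defs.
From Stdlib Require Import Reals Lra Lia List Sorting Permutation ZArith ClassicalEpsilon Classical FunctionalExtensionality.
Open Scope R_scope.


Lemma phi_props phi (H : is_Phi_sequence phi) j : (1 <= j)%nat ->
  nondecr_on_nonneg (phi j) /\ convex_on_nonneg (phi j) /\ phi j 0 = 0.
Proof. destruct H as [H _]; auto. Qed.

Lemma phi_nonneg phi (H : is_Phi_sequence phi) j x :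
  (1 <= j)%nat -> 0 <= x -> 0 <= phi j x.
Proof.
  intros Hj Hx. destruct (phi_props phi H j Hj) as [Hm [_ H0]].
  rewrite <- H0. apply Hm; lra.
Qed.

Lemma phi_mono phi (H : is_Phi_sequence phi) j x y :
  (1 <= j)%nat -> 0 <= x -> x <= y -> phi j x <= phi j y.
Proof. intros Hj. destruct (phi_props phi H j Hj) as [Hm _]. apply Hm. Qed.

Lemma phi_scale phi (H : is_Phi_sequence phi) j x t :
  (1 <= j)%nat -> 0 <= x -> 0 <= t <= 1 -> phi j (t * x) <= t * phi j x.
Proof.
  intros Hj Hx Ht. destruct (phi_props phi H j Hj) as [_ [Hc H0]].
  specialize (Hc x 0 t Hx (Rle_refl 0) Ht).
  replace (t * x + (1 - t) * 0) with (t * x) in Hc by ring.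
  rewrite H0 in Hc. lra.
Qed.

Lemma phi_superlin phi (H : is_Phi_sequence phi) j x t :
  (1 <= j)%nat -> 0 <= x -> 1 <= t -> t * phi j x <= phi j (t * x).
Proof.
  intros Hj Hx Ht.
  assert (Hs := phi_scale phi H j (t * x) (/ t) Hj).
  replace (/ t * (t * x)) with x in Hs by (field; lra).
  assert (0 <= / t <= 1).
  { split. left; apply Rinv_0_lt_compat; lra.
    rewrite <- Rinv_1. apply Rinv_le_contravar; lra. }
  specialize (Hs ltac:(nra) H0).
  apply Rmult_le_reg_l with (/ t). apply Rinv_0_lt_compat; lra.
  rewrite <- Rmult_assoc, Rinv_l by lra. lra.
Qed.

Lemma phi_superadd phi (H : is_Phi_sequence phi) j x y :
  (1 <= j)%nat -> 0 <= x -> 0 <= y -> phi j x + phi j y <= phi j (x + y).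
Proof.
  intros Hj Hx Hy.
  destruct (Req_dec (x + y) 0) as [E|E].
  { assert (x = 0) by lra. assert (y = 0) by lra. subst.
    destruct (phi_props phi H j Hj) as [_ [_ H0]]. rewrite Rplus_0_r, H0. lra. }
  assert (h1 := phi_scale phi H j (x + y) (x / (x + y)) Hj ltac:(lra)).
  assert (h2 := phi_scale phi H j (x + y) (y / (x + y)) Hj ltac:(lra)).
  replace (x / (x + y) * (x + y)) with x in h1 by (field; lra).
  replace (y / (x + y) * (x + y)) with y in h2 by (field; lra).
  assert (0 <= x / (x+y) <= 1).
  { split. apply Rmult_le_pos; [lra| left; apply Rinv_0_lt_compat; lra].
    apply Rmult_le_reg_r with (x+y). lra. field_simplify; lra. }
  assert (0 <= y / (x+y) <= 1).
  { split. apply Rmult_le_pos; [lra| left; apply Rinv_0_lt_compat; lra].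
    apply Rmult_le_reg_r with (x+y). lra. field_simplify; lra. }
  specialize (h1 H0). specialize (h2 H1).
  assert (x / (x + y) * phi j (x + y) + y / (x + y) * phi j (x + y) = phi j (x+y))
    by (field; lra).
  lra.
Qed.

Lemma phi_index_dec phi (H : is_Phi_sequence phi) j j' x :
  (1 <= j)%nat -> (j <= j')%nat -> 0 <= x -> phi j' x <= phi j x.
Proof.
  intros Hj Hjj' Hx. induction Hjj'. lra.
  destruct (Req_dec x 0) as [E|E].
  { subst. destruct (phi_props phi H (S m) ltac:(lia)) as [_ [_ H0]].
    destruct (phi_props phi H j Hj) as [_ [_ H1]]. lra. }
  destruct H as [_ [H2 _]]. specialize (H2 m x ltac:(lia) ltac:(lra)). lra.
Qed.

Lemma PhiSum_le_termwise phi n x y :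
  (forall j, (1 <= j <= n)%nat -> phi j x <= phi j y) ->
  PhiSum phi n x <= PhiSum phi n y.
Proof.
  induction n; simpl; intros Hj. lra.
  assert (IH := IHn (fun j Hj' => Hj j ltac:(lia))).
  specialize (Hj (S n) ltac:(lia)). lra.
Qed.

Lemma PhiSum_nonneg phi (H : is_Phi_sequence phi) n x :
  0 <= x -> 0 <= PhiSum phi n x.
Proof.
  intros Hx. induction n; simpl. lra.
  assert (0 <= phi (S n) x) by (apply phi_nonneg; auto; lia). lra.
Qed.

Lemma PhiSum_zero phi (H : is_Phi_sequence phi) n : PhiSum phi n 0 = 0.
Proof.
  induction n; simpl. lra.
  destruct (phi_props phi H (S n) ltac:(lia)) as [_ [_ H0]]. lra.
Qed.

Lemma PhiSum_mono phi (H : is_Phi_sequence phi) n x y :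
  0 <= x -> x <= y -> PhiSum phi n x <= PhiSum phi n y.
Proof.
  intros. apply PhiSum_le_termwise. intros j Hj. apply phi_mono; auto; lia.
Qed.

Lemma PhiSum_scale phi (H : is_Phi_sequence phi) n x t :
  0 <= x -> 0 <= t <= 1 -> PhiSum phi n (t * x) <= t * PhiSum phi n x.
Proof.
  intros Hx Ht. induction n; simpl. lra.
  assert (phi (S n) (t * x) <= t * phi (S n) x) by (apply phi_scale; auto; lia).
  lra.
Qed.

Lemma PhiSum_superlin phi (H : is_Phi_sequence phi) n x t :
  0 <= x -> 1 <= t -> t * PhiSum phi n x <= PhiSum phi n (t * x).
Proof.
  intros Hx Ht. induction n; simpl. lra.
  assert (t * phi (S n) x <= phi (S n) (t * x)) by (apply phi_superlin; auto; lia).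
  lra.
Qed.

Lemma PhiSum_superadd phi (H : is_Phi_sequence phi) n x y :
  0 <= x -> 0 <= y -> PhiSum phi n x + PhiSum phi n y <= PhiSum phi n (x + y).
Proof.
  intros Hx Hy. induction n; simpl. lra.
  assert (phi (S n) x + phi (S n) y <= phi (S n) (x + y)) by (apply phi_superadd; auto; lia).
  lra.
Qed.

Lemma PhiSum_convex phi (H : is_Phi_sequence phi) n : convex_on_nonneg (PhiSum phi n).
Proof.
  intros x y t Hx Hy Ht. induction n; simpl. lra.
  destruct (phi_props phi H (S n) ltac:(lia)) as [_ [Hc _]].
  specialize (Hc x y t Hx Hy Ht). lra.
Qed.

Lemma PhiSum_mono_index phi (H : is_Phi_sequence phi) k m x :
  (k <= m)%nat -> 0 <= x -> PhiSum phi k x <= PhiSum phi m x.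
Proof.
  intros Hkm Hx. induction Hkm. lra. simpl.
  assert (0 <= phi (S m) x) by (apply phi_nonneg; auto; lia). lra.
Qed.

Lemma PhiSum_ge_last phi (H : is_Phi_sequence phi) k x :
  0 <= x -> INR k * phi k x <= PhiSum phi k x.
Proof.
  intros Hx. induction k. simpl. lra.
  destruct k. simpl. lra.
  change (PhiSum phi (S (S k)) x) with (PhiSum phi (S k) x + phi (S (S k)) x).
  rewrite (S_INR (S k)).
  assert (phi (S (S k)) x <= phi (S k) x) by (apply phi_index_dec; auto; lia).
  assert (0 <= INR (S k)) by apply pos_INR. nra.
Qed.

Lemma PhiSum_tail phi (H : is_Phi_sequence phi) k m x :
  (1 <= k)%nat -> (k <= m)%nat -> 0 <= x ->
  PhiSum phi m x <= PhiSum phi k x + INR (m - k) * phi k x.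
Proof.
  intros Hk Hkm Hx. induction Hkm.
  rewrite Nat.sub_diag. simpl. lra.
  replace (S m - k)%nat with (S (m - k)) by lia. rewrite S_INR.
  change (PhiSum phi (S m) x) with (PhiSum phi m x + phi (S m) x).
  assert (phi (S m) x <= phi k x) by (apply phi_index_dec; auto; lia). lra.
Qed.

Lemma PhiSum_index_concave phi (H : is_Phi_sequence phi) k m x :
  (1 <= k)%nat -> (k <= m)%nat -> 0 <= x ->
  INR k * PhiSum phi m x <= INR m * PhiSum phi k x.
Proof.
  intros Hk Hkm Hx.
  assert (h1 := PhiSum_tail phi H k m x Hk Hkm Hx).
  assert (h2 := PhiSum_ge_last phi H k x Hx).
  assert (hk : 0 <= INR k) by apply pos_INR.
  assert (hmk : INR m = INR k + INR (m - k)).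
  { rewrite <- plus_INR. f_equal. lia. }
  assert (0 <= INR (m - k)) by apply pos_INR.
  assert (0 <= phi k x) by (apply phi_nonneg; auto).
  rewrite hmk. nra.
Qed.

Lemma PhiSum_pos phi (H : is_Phi_sequence phi) k x :
  (1 <= k)%nat -> 0 < x -> 0 < PhiSum phi k x.
Proof.
  intros Hk Hx. induction Hk. simpl. destruct H as [_ [_ [H1 _]]].
  specialize (H1 x Hx). lra.
  simpl. assert (0 <= phi (S m) x) by (apply phi_nonneg; [exact H|lia|lra]). lra.
Qed.

Lemma conv_scale g x t : convex_on_nonneg g -> g 0 = 0 -> 0 <= x -> 0 <= t <= 1 ->
  g (t * x) <= t * g x.
Proof.
  intros Hc H0 Hx Ht. specialize (Hc x 0 t Hx (Rle_refl 0) Ht).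
  replace (t * x + (1 - t) * 0) with (t * x) in Hc by ring. rewrite H0 in Hc. lra.
Qed.

Lemma inv_exists g y : convex_on_nonneg g -> nondecr_on_nonneg g -> g 0 = 0 ->
  (exists x0, 0 < x0 /\ 0 < g x0) -> 0 < y -> exists b, 0 <= b /\ g b = y.
Proof.
  intros Hc Hm H0 [x0 [Hx0 Hgx0]] Hy.
  set (E := fun x => 0 <= x /\ g x <= y).
  set (X := (y / g x0 + 1) * x0).
  assert (HX1 : 1 <= y / g x0 + 1).
  { assert (0 < y / g x0) by (apply Rdiv_lt_0_compat; lra). lra. }
  assert (HgX : y < g X).
  { assert (h := conv_scale g X (/ (y / g x0 + 1)) Hc H0).
    unfold X in h. replace (/ (y / g x0 + 1) * ((y / g x0 + 1) * x0)) with x0 in h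
      by (field; split; lra).
    assert (0 < / (y / g x0 + 1) <= 1).
    { split. apply Rinv_0_lt_compat; lra. rewrite <- Rinv_1.
      apply Rinv_le_contravar; lra. }
    specialize (h ltac:(unfold X; nra) ltac:(lra)).
    fold X in h.
    assert (g x0 * (y / g x0 + 1) <= g X).
    { apply Rmult_le_reg_l with (/ (y / g x0 + 1)). lra.
      replace (/ (y / g x0 + 1) * (g x0 * (y / g x0 + 1))) with (g x0) by (field; lra).
      lra. }
    assert (g x0 * (y / g x0 + 1) = y + g x0) by (field; lra). lra. }
  assert (HXpos : 0 < X) by (unfold X; nra).
  assert (Hb : bound E).
  { exists X. intros x [Hx Hgx]. destruct (Rle_dec x X) as [|n]; auto.
    assert (g X <= g x) by (apply Hm; lra). lra. }
  assert (He : exists x, E x) by (exists 0; split; lra).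
  destruct (completeness E Hb He) as [b [Hub Hlub]].
  assert (Hb0 : 0 <= b) by (apply Hub; split; lra).
  assert (HbX : b <= X).
  { apply Hlub. intros x [Hx Hgx]. destruct (Rle_dec x X) as [|n]; auto.
    assert (g X <= g x) by (apply Hm; lra). lra. }
  exists b. split; auto.
  destruct (Rtotal_order (g b) y) as [Hlt|[Heq|Hgt]]; auto.
  - (* g b < y : find a point to the right still in E *)
    exfalso.
    set (D := g (b + 1) - g b).
    assert (HD : 0 <= D) by (unfold D; assert (g b <= g (b+1)) by (apply Hm; lra); lra).
    set (d := Rmin 1 ((y - g b) / (2 * (D + 1)))).
    assert (Hd0 : 0 < d).
    { unfold d. apply Rmin_glb_lt. lra. apply Rdiv_lt_0_compat; lra. }
    assert (Hd1 : d <= 1) by apply Rmin_l.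
    assert (Hd2 : d <= (y - g b) / (2 * (D + 1))) by apply Rmin_r.
    assert (Hz : g (b + d) <= y).
    { specialize (Hc b (b + 1) (1 - d) Hb0 ltac:(lra) ltac:(lra)).
      replace ((1 - d) * b + (1 - (1 - d)) * (b + 1)) with (b + d) in Hc by ring.
      assert (d * D <= (y - g b) / 2).
      { apply Rle_trans with ((y - g b) / (2 * (D + 1)) * D). apply Rmult_le_compat_r; lra.
        apply Rmult_le_reg_r with (2 * (D + 1)). lra.
        replace ((y - g b) / (2 * (D + 1)) * D * (2 * (D + 1))) with ((y - g b) * D) by (field; lra).
        replace ((y - g b) / 2 * (2 * (D + 1))) with ((y - g b) * (D + 1)) by (field; lra).
        nra. }
      unfold D in *. nra. }
    assert (b + d <= b) by (apply Hub; split; lra). lra.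
  -
    exfalso.
    assert (Hbpos : 0 < b).
    { destruct Hb0 as [|E0]; auto. subst b. rewrite H0 in Hgt. lra. }
    set (D := g (2 * b) - y).
    assert (HD : g b - y <= D) by (unfold D; assert (g b <= g (2*b)) by (apply Hm; lra); lra).
    set (e := Rmin (1/2) ((g b - y) / (2 * D))).
    assert (He0 : 0 < e).
    { unfold e. apply Rmin_glb_lt. lra. apply Rdiv_lt_0_compat; lra. }
    assert (He1 : e <= 1/2) by apply Rmin_l.
    assert (He2 : e <= (g b - y) / (2 * D)) by apply Rmin_r.
    assert (Hs : exists s, E s /\ (1 - e) * b < s).
    { apply not_all_not_ex. intros Hn.
      assert (b <= (1 - e) * b).
      { apply Hlub. intros x Ex. specialize (Hn x).
        apply not_and_or in Hn. destruct Hn as [Hn|Hn]. contradiction. lra. }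
      nra. }
    destruct Hs as [s [[Hs0 Hgs] Hslt]].
    assert (Hl : g ((1 - e) * b) <= y).
    { apply Rle_trans with (g s); auto. apply Hm; nra. }
    set (t := / (1 + e)).
    assert (Ht : 0 <= t <= 1).
    { unfold t. split. left; apply Rinv_0_lt_compat; lra. rewrite <- Rinv_1.
      apply Rinv_le_contravar; lra. }
    specialize (Hc ((1 - e) * b) (2 * b) t ltac:(nra) ltac:(lra) Ht).
    replace (t * ((1 - e) * b) + (1 - t) * (2 * b)) with b in Hc
      by (unfold t; field; lra).
    assert (H1t : 1 - t <= e).
    { unfold t. apply Rmult_le_reg_r with (1 + e). lra.
      replace ((1 - / (1 + e)) * (1 + e)) with e by (field; lra). nra. }
    assert (t * g ((1 - e) * b) <= t * y) by (apply Rmult_le_compat_l; lra).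
    assert ((1 - t) * g (2 * b) <= (1 - t) * y + e * D).
    { unfold D. assert (0 <= 1 - t) by lra.
      replace ((1 - t) * g (2 * b)) with ((1 - t) * y + (1 - t) * (g (2 * b) - y)) by ring.
      apply Rplus_le_compat_l. apply Rmult_le_compat_r. unfold D in HD; lra. lra. }
    assert (e * D <= (g b - y) / 2).
    { apply Rle_trans with ((g b - y) / (2 * D) * D). apply Rmult_le_compat_r; lra.
      right. field. lra. }
    lra.
Qed.

Lemma PhiInv_spec phi (H : is_Phi_sequence phi) k :
  (1 <= k)%nat -> 0 < PhiInv phi k 1 /\ PhiSum phi k (PhiInv phi k 1) = 1.
Proof.
  intros Hk.
  assert (Hex : exists b, 0 <= b /\ PhiSum phi k b = 1).
  { apply inv_exists.
    - apply PhiSum_convex; auto.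
    - intros x y Hx Hxy. apply PhiSum_mono; auto.
    - apply PhiSum_zero; auto.
    - exists 1. split. lra. apply PhiSum_pos; auto; lra.
    - lra. }
  unfold PhiInv.
  destruct (epsilon_spec (inhabits 0) (fun x => 0 <= x /\ PhiSum phi k x = 1) Hex)
    as [h1 h2].
  split; auto. destruct h1 as [|E]; auto. rewrite <- E in h2.
  rewrite PhiSum_zero in h2; auto. lra.
Qed.

Lemma Rpower_pos x y : 0 < Rpower x y.
Proof. unfold Rpower. apply exp_pos. Qed.

Lemma rpow_pos_eq x p : 0 < x -> rpow x p = Rpower x p.
Proof. intros. unfold rpow. destruct (Req_EM_T x 0); [lra|auto]. Qed.

Lemma rpow_0 p : rpow 0 p = 0.
Proof. unfold rpow. destruct (Req_EM_T 0 0); [auto|lra]. Qed.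

Lemma rpow_nonneg x p : 0 <= rpow x p.
Proof. unfold rpow. destruct (Req_EM_T x 0). lra. left; apply Rpower_pos. Qed.

Lemma rpow_le x y p : 0 < p -> 0 <= x -> x <= y -> rpow x p <= rpow y p.
Proof.
  intros Hp Hx Hxy. destruct Hx as [Hx|Hx].
  - rewrite !rpow_pos_eq by lra. apply Rle_Rpower_l; lra.
  - subst. rewrite rpow_0. apply rpow_nonneg.
Qed.

Lemma rpow_lt x y p : 0 < p -> 0 <= x -> x < y -> rpow x p < rpow y p.
Proof.
  intros Hp Hx Hxy. destruct Hx as [Hx|Hx].
  - rewrite !rpow_pos_eq by lra. apply Rlt_Rpower_l; lra.
  - subst. rewrite rpow_0. rewrite rpow_pos_eq by lra. apply Rpower_pos.
Qed.

Lemma rpow_mult x y p : 0 <= x -> 0 <= y -> rpow (x * y) p = rpow x p * rpow y p.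
Proof.
  intros Hx Hy. destruct Hx as [Hx|Hx]; [destruct Hy as [Hy|Hy]|].
  - rewrite !rpow_pos_eq by nra. rewrite Rpower_mult_distr; auto.
  - subst. rewrite Rmult_0_r, rpow_0. ring.
  - subst. rewrite Rmult_0_l, rpow_0. ring.
Qed.

Lemma rpow_inv x p : 0 < p -> 0 <= x -> rpow (rpow x p) (1 / p) = x.
Proof.
  intros Hp Hx. destruct Hx as [Hx|Hx].
  - rewrite (rpow_pos_eq x p) by auto. rewrite rpow_pos_eq by apply Rpower_pos.
    rewrite Rpower_mult. replace (p * (1 / p)) with 1 by (field; lra).
    apply Rpower_1; auto.
  - subst. rewrite !rpow_0. auto.
Qed.

Lemma rpow_inv' x p : 0 < p -> 0 <= x -> rpow (rpow x (1 / p)) p = x.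
Proof.
  intros Hp Hx. destruct Hx as [Hx|Hx].
  - rewrite (rpow_pos_eq x (1/p)) by auto. rewrite rpow_pos_eq by apply Rpower_pos.
    rewrite Rpower_mult. replace (1 / p * p) with 1 by (field; lra).
    apply Rpower_1; auto.
  - subst. rewrite !rpow_0. auto.
Qed.

Lemma rpow_1 x : 0 <= x -> rpow x 1 = x.
Proof.
  intros [Hx|Hx]. rewrite rpow_pos_eq by auto. apply Rpower_1; auto.
  subst; apply rpow_0.
Qed.

Lemma rpow_le_inv x y p : 0 < p -> 0 <= x -> 0 <= y -> rpow x p <= rpow y p -> x <= y.
Proof.
  intros Hp Hx Hy H. destruct (Rle_dec x y) as [|n]; auto.
  assert (rpow y p < rpow x p) by (apply rpow_lt; lra). lra.
Qed.

Lemma Rpower_half x p : 0 < x -> Rpower (x / 2) p = Rpower x p / Rpower 2 p.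
Proof.
  intros Hx. unfold Rdiv. rewrite <- Rpower_mult_distr by lra.
  f_equal. unfold Rpower. rewrite ln_Rinv by lra.
  replace (p * - ln 2) with (- (p * ln 2)) by ring. apply exp_Ropp.
Qed.

Lemma Rpower2_ge2 p : 1 <= p -> 2 <= Rpower 2 p.
Proof.
  intros Hp. rewrite <- (Rpower_1 2) at 1 by lra. apply Rle_Rpower; lra.
Qed.

Lemma pow2_ge n : INR n <= 2 ^ n.
Proof.
  induction n. simpl; lra. rewrite S_INR. simpl.
  assert (1 <= 2 ^ n) by (apply pow_R1_Rle; lra). lra.
Qed.

Fixpoint costL (phi : nat -> R -> R) (j0 : nat) (l : list R) : R :=
  match l with nil => 0 | x :: l' => phi j0 x + costL phi (S j0) l' end.
Definition powL (p : R) (l : list R) : R := fold_right Rplus 0 (map (fun x => rpow x p) l).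
Definition geb (s x : R) : bool := if Rle_dec s x then true else false.
Definition cnt (s : R) (l : list R) : nat := length (filter (geb s) l).
Fixpoint PS (phi : nat -> R -> R) (j0 c : nat) (x : R) : R :=
  match c with O => 0 | S c' => phi j0 x + PS phi (S j0) c' x end.
Definition Sd := StronglySorted (fun x y : R => y <= x).

Lemma PS_PhiSum_gen phi x c : forall j0,
  PhiSum phi j0 x + PS phi (S j0) c x = PhiSum phi (j0 + c) x.
Proof.
  induction c; intros j0; simpl. rewrite Nat.add_0_r. lra.
  rewrite <- Nat.add_succ_comm. rewrite <- IHc. simpl. lra.
Qed.

Lemma PS_PhiSum phi c x : PS phi 1 c x = PhiSum phi c x.
Proof. assert (h := PS_PhiSum_gen phi x c 0). simpl in h. lra. Qed.

Lemma costL_nonneg phi (H : is_Phi_sequence phi) l : forall j0,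
  (1 <= j0)%nat -> List.Forall (fun x => 0 <= x) l -> 0 <= costL phi j0 l.
Proof.
  induction l; intros j0 Hj Hl; simpl. lra.
  inversion Hl; subst. assert (0 <= phi j0 a) by (apply phi_nonneg; auto).
  assert (0 <= costL phi (S j0) l) by (apply IHl; auto). lra.
Qed.

Lemma costL_map_mono phi (H : is_Phi_sequence phi) (f g : R -> R) (l : list R) : forall j0,
  (1 <= j0)%nat -> (forall x, In x l -> 0 <= f x <= g x) ->
  costL phi j0 (map f l) <= costL phi j0 (map g l).
Proof.
  induction l; intros j0 Hj Hl; simpl. lra.
  assert (phi j0 (f a) <= phi j0 (g a)).
  { destruct (Hl a (or_introl eq_refl)). apply phi_mono; auto. }
  assert (costL phi (S j0) (map f l) <= costL phi (S j0) (map g l)).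
  { apply IHl. lia. intros; apply Hl; simpl; auto. }
  lra.
Qed.

Lemma cnt_zero s l : (forall y, In y l -> y < s) -> cnt s l = 0%nat.
Proof.
  unfold cnt. induction l; intros Hl; simpl. auto.
  unfold geb at 1. destruct (Rle_dec s a).
  - specialize (Hl a (or_introl eq_refl)). lra.
  - apply IHl. intros; apply Hl; simpl; auto.
Qed.

Lemma cnt_le_length s l : (cnt s l <= length l)%nat.
Proof. unfold cnt. apply filter_length_le. Qed.

Lemma cnt_cons_ge s x l : s <= x -> cnt s (x :: l) = S (cnt s l).
Proof. intros. unfold cnt. simpl. unfold geb at 1. destruct (Rle_dec s x); [auto|lra]. Qed.

Lemma cnt_cons_lt s x l : x < s -> cnt s (x :: l) = cnt s l.
Proof. intros. unfold cnt. simpl. unfold geb at 1. destruct (Rle_dec s x); [lra|auto]. Qed.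

Lemma PS_nonneg phi (H : is_Phi_sequence phi) c : forall j0 x,
  (1 <= j0)%nat -> 0 <= x -> 0 <= PS phi j0 c x.
Proof.
  induction c; intros j0 x Hj Hx; simpl. lra.
  assert (0 <= phi j0 x) by (apply phi_nonneg; auto).
  assert (0 <= PS phi (S j0) c x) by (apply IHc; auto). lra.
Qed.

Lemma Sd_tail_lt x l s : Sd (x :: l) -> x < s -> forall y, In y l -> y < s.
Proof.
  intros Hs Hx y Hy. apply StronglySorted_inv in Hs. destruct Hs as [_ Hf].
  rewrite Forall_forall in Hf. specialize (Hf y Hy). lra.
Qed.

Lemma lem_C1 phi (H : is_Phi_sequence phi) s l : forall j0,
  Sd l -> List.Forall (fun x => 0 <= x) l -> 0 <= s -> (1 <= j0)%nat ->
  PS phi j0 (cnt s l) s <= costL phi j0 l.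
Proof.
  induction l; intros j0 Hs Hl Hs0 Hj. simpl. lra.
  inversion Hl; subst.
  destruct (Rle_dec s a) as [Hle|Hlt].
  - rewrite cnt_cons_ge by auto. simpl.
    assert (phi j0 s <= phi j0 a) by (apply phi_mono; auto).
    assert (PS phi (S j0) (cnt s l) s <= costL phi (S j0) l).
    { apply IHl; auto. apply StronglySorted_inv in Hs; tauto. }
    lra.
  - rewrite cnt_cons_lt by lra. rewrite cnt_zero.
    + exact (costL_nonneg phi H (a::l) j0 Hj Hl).
    + apply Sd_tail_lt with a; auto. lra.
Qed.

Lemma lem_S1 phi (H : is_Phi_sequence phi) T l : forall j0,
  Sd l -> List.Forall (fun x => 0 <= x) l -> 0 < T -> (1 <= j0)%nat ->
  costL phi j0 (map (Rmin (T/2)) l) + PS phi j0 (cnt T l) (T/2)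
    <= costL phi j0 (map (Rmin T) l).
Proof.
  induction l; intros j0 Hs Hl HT Hj. simpl. lra.
  inversion Hl; subst.
  destruct (Rle_dec T a) as [Hle|Hlt].
  - rewrite cnt_cons_ge by auto. simpl.
    rewrite (Rmin_left T a) by auto. rewrite (Rmin_left (T/2) a) by lra.
    assert (phi j0 (T/2) + phi j0 (T/2) <= phi j0 T).
    { replace T with (T/2 + T/2) at 3 by field. apply phi_superadd; auto; lra. }
    assert (costL phi (S j0) (map (Rmin (T / 2)) l) + PS phi (S j0) (cnt T l) (T / 2)
            <= costL phi (S j0) (map (Rmin T) l)).
    { apply IHl; auto. apply StronglySorted_inv in Hs; tauto. }
    lra.
  - rewrite cnt_cons_lt by lra. rewrite cnt_zero.
    + simpl. rewrite Rplus_0_r.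
      apply (costL_map_mono phi H (Rmin (T/2)) (Rmin T) (a :: l) j0 Hj).
      intros x Hx. rewrite Forall_forall in Hl. specialize (Hl x Hx).
      unfold Rmin. destruct (Rle_dec (T/2) x); destruct (Rle_dec T x); lra.
    + apply Sd_tail_lt with a; auto. lra.
Qed.

Lemma lem_S2 p T l : List.Forall (fun x => 0 <= x) l -> 0 < T -> 0 < p ->
  powL p (map (Rmin T) l) <= powL p (map (Rmin (T/2)) l) + INR (cnt (T/2) l) * rpow T p.
Proof.
  induction l; intros Hl HT Hp. unfold powL, cnt; simpl. lra.
  inversion Hl; subst. specialize (IHl H2 HT Hp).
  unfold powL in *. simpl.
  destruct (Rle_dec (T/2) a) as [Hle|Hlt].
  - rewrite cnt_cons_ge by auto. rewrite S_INR.
    assert (rpow (Rmin T a) p <= rpow T p).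
    { apply rpow_le; auto. unfold Rmin; destruct (Rle_dec T a); lra. apply Rmin_l. }
    assert (0 <= rpow (Rmin (T / 2) a) p) by apply rpow_nonneg. lra.
  - rewrite cnt_cons_lt by lra.
    rewrite (Rmin_right T a) by lra. rewrite (Rmin_right (T/2) a) by lra. lra.
Qed.

Lemma powL_bound p T l : 0 < p -> (forall x, In x l -> 0 <= x <= T) ->
  powL p l <= INR (length l) * rpow T p.
Proof.
  induction l; intros Hp Hl; unfold powL in *. simpl; lra.
  change (length (a::l)) with (S (length l)); rewrite S_INR; simpl.
  assert (rpow a p <= rpow T p).
  { destruct (Hl a (or_introl eq_refl)). apply rpow_le; auto. }
  assert (fold_right Rplus 0 (map (fun x : R => rpow x p) l) <= INR (length l) * rpow T p).
  { apply IHl; auto. intros; apply Hl; simpl; auto. }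
  lra.
Qed.

Lemma map_Rmin_id (T : R) (l : list R) : (forall x, In x l -> x <= T) -> map (Rmin T) l = l.
Proof.
  induction l; intros Hl; simpl. auto.
  rewrite Rmin_right by (apply Hl; simpl; auto). f_equal. apply IHl.
  intros; apply Hl; simpl; auto.
Qed.

Lemma INR_Ztonat z : (0 <= z)%Z -> INR (Z.to_nat z) = IZR z.
Proof. intros. rewrite INR_IZR_INZ. rewrite Z2Nat.id; auto. Qed.

Lemma ceil_exists r : 0 <= r -> exists m : nat, r <= INR m < r + 1.
Proof.
  intros Hr. destruct (archimed r) as [h1 h2].
  assert (Hz : (0 <= up r)%Z).
  { apply le_IZR. lra. }
  destruct (Req_dec (IZR (up r) - r) 1) as [E|E].
  - exists (Z.to_nat (up r - 1)). rewrite INR_Ztonat.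
    rewrite minus_IZR. lra.
    assert (0 <= IZR (up r - 1)) by (rewrite minus_IZR; lra). apply le_IZR; auto.
  - exists (Z.to_nat (up r)). rewrite INR_Ztonat by auto. lra.
Qed.

Lemma exists_pow2_gt M : exists j : nat, M < 2 ^ j.
Proof.
  destruct (archimed (Rabs M)) as [h1 h2].
  assert (Hz : (0 <= up (Rabs M))%Z).
  { apply le_IZR. assert (0 <= Rabs M) by apply Rabs_pos. lra. }
  exists (Z.to_nat (up (Rabs M))).
  assert (h := pow2_ge (Z.to_nat (up (Rabs M)))). rewrite INR_Ztonat in h by auto.
  assert (M <= Rabs M) by apply Rle_abs. lra.
Qed.

Lemma fold_Rmax_ge x l : In x l -> x <= fold_right Rmax 0 l.
Proof.
  induction l; simpl; intros Hin. contradiction.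
  destruct Hin as [E|Hin]. subst. apply Rmax_l.
  apply Rle_trans with (fold_right Rmax 0 l). auto. apply Rmax_r.
Qed.

Lemma fold_Rmax_nonneg l : 0 <= fold_right Rmax 0 l.
Proof. induction l; simpl. lra. apply Rle_trans with (fold_right Rmax 0 l); auto. apply Rmax_r. Qed.

Lemma fold_Rmax_attained l : 0 < fold_right Rmax 0 l -> exists x, In x l /\ x = fold_right Rmax 0 l.
Proof.
  induction l; simpl; intros Hp. lra.
  destruct (Rle_dec a (fold_right Rmax 0 l)).
  - rewrite Rmax_right in * by auto. destruct (IHl Hp) as [x [Hx Ex]]. exists x; auto.
  - rewrite Rmax_left in * by lra. exists a; auto.
Qed.

Lemma Rpower_INR_inv N p : 0 < p -> (1 <= N)%nat -> Rpower (Rpower (INR N) (1/p)) p = INR N.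
Proof.
  intros Hp HN. rewrite Rpower_mult. replace (1 / p * p) with 1 by (field; lra).
  apply Rpower_1. apply lt_0_INR; lia.
Qed.


Lemma LB phi (H : is_Phi_sequence phi) p K n N x : 1 <= p -> 0 < K ->
  (forall k, (1 <= k <= n)%nat -> Rpower (INR k) (1/p) * PhiInv phi k 1 <= K) ->
  (1 <= N)%nat -> (N <= n)%nat -> 0 < x ->
  INR N * Rpower x p <= Rpower K p -> Rpower K p <= INR n * Rpower x p ->
  INR N * Rpower x p <= 2 * Rpower K p * PhiSum phi N x.
Proof.
  intros Hp HK Hb HN HNn Hx H1 H2.
  assert (Hxp : 0 < Rpower x p) by apply Rpower_pos.
  set (r := Rpower K p / Rpower x p).
  assert (HKr : Rpower K p = r * Rpower x p) by (unfold r; field; lra).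
  assert (HNr : INR N <= r).
  { apply Rmult_le_reg_r with (Rpower x p); auto. lra. }
  assert (Hrn : r <= INR n).
  { apply Rmult_le_reg_r with (Rpower x p); auto. lra. }
  assert (HN1 : 1 <= INR N) by (apply (le_INR 1); lia).
  destruct (ceil_exists r ltac:(lra)) as [m [Hm1 Hm2]].
  assert (HNm : (N <= m)%nat) by (apply INR_le; lra).
  assert (Hmn : (m <= n)%nat).
  { assert (INR m < INR (S n)) by (rewrite S_INR; lra). apply INR_lt in H0. lia. }
  assert (Hm1' : (1 <= m)%nat) by lia.
  destruct (PhiInv_spec phi H m Hm1') as [Hbpos Hbeq].
  specialize (Hb m ltac:(lia)).
  set (q := Rpower (INR m) (1 / p)) in *.
  assert (Hq : 0 < q) by apply Rpower_pos.
  assert (HKq : K <= q * x).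
  { destruct (Rle_dec K (q * x)) as [|Hn]; auto.
    assert (Rpower (q * x) p < Rpower K p) by (apply Rlt_Rpower_l; nra).
    rewrite <- Rpower_mult_distr in H0 by lra.
    unfold q in H0. rewrite Rpower_INR_inv in H0 by (auto; lra).
    assert (INR m * Rpower x p >= r * Rpower x p) by nra. lra. }
  assert (Hbx : PhiInv phi m 1 <= x).
  { apply Rmult_le_reg_l with q; auto. lra. }
  assert (HPm : 1 <= PhiSum phi m x).
  { rewrite <- Hbeq. apply PhiSum_mono; auto; lra. }
  assert (Hconc := PhiSum_index_concave phi H N m x HN HNm ltac:(lra)).
  assert (HPN : 0 <= PhiSum phi N x) by (apply PhiSum_nonneg; auto; lra).
  assert (INR N <= INR m * PhiSum phi N x) by nra.
  assert (INR m <= 2 * r) by lra.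
  rewrite HKr.
  assert (INR m * PhiSum phi N x <= 2 * r * PhiSum phi N x) by nra.
  nra.
Qed.

Lemma first_fail (Q : nat -> Prop) : (exists j, ~ Q j) ->
  exists L, ~ Q L /\ forall j, (j < L)%nat -> Q j.
Proof.
  intros [j Hj]. revert Hj. induction j using (well_founded_induction lt_wf).
  intros Hj. destruct (classic (exists j', (j' < j)%nat /\ ~ Q j')) as [[j' [Hlt Hn]]|Hno].
  - apply (H j' Hlt Hn).
  - exists j. split; auto. intros j' Hj'. apply NNPP. intros Hn. apply Hno; eauto.
Qed.

Lemma core phi (H : is_Phi_sequence phi) p K n a : 1 <= p -> 0 < K ->
  (forall k, (1 <= k <= n)%nat -> Rpower (INR k) (1/p) * PhiInv phi k 1 <= K) ->
  length a = n -> Sd a -> List.Forall (fun x => 0 <= x) a -> costL phi 1 a <= 1 ->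
  powL p a <= 3 * (Rpower 2 p * Rpower 2 p) * Rpower K p.
Proof.
  intros Hp HK Hb Hlen Hs Ha Hcost.
  set (T0 := 1 + fold_right Rmax 0 a).
  assert (HT0 : 0 < T0) by (unfold T0; assert (h := fold_Rmax_nonneg a); lra).
  set (T := fun i : nat => T0 / 2 ^ i).
  assert (HTpos : forall i, 0 < T i).
  { intros i. unfold T. apply Rdiv_lt_0_compat; auto. apply pow_lt; lra. }
  assert (HTS : forall i, T (S i) = T i / 2).
  { intros i. unfold T. simpl. field. apply pow_nonzero; lra. }
  set (Kp := Rpower K p). set (c2 := Rpower 2 p).
  assert (Hc2 : 2 <= c2) by (apply Rpower2_ge2; auto).
  assert (HKp : 0 < Kp) by apply Rpower_pos.
  assert (HTp : forall i, Rpower (T (S i)) p = Rpower (T i) p / c2).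
  { intros i. rewrite HTS. apply Rpower_half; auto. }
  set (G := fun i => costL phi 1 (map (Rmin (T i)) a)).
  set (P := fun i => powL p (map (Rmin (T i)) a)).
  set (N := fun i => cnt (T i) a).
  assert (Ha' : forall x, In x a -> 0 <= x) by (apply Forall_forall; auto).
  assert (HNn : forall i, (N i <= n)%nat) by (intros; unfold N; rewrite <- Hlen; apply cnt_le_length).
  assert (F1 : forall i, G (S i) + PhiSum phi (N i) (T (S i)) <= G i).
  { intros i. unfold G, N. rewrite <- PS_PhiSum. rewrite HTS.
    apply lem_S1; auto. }
  assert (HG0 : forall i, 0 <= G i).
  { intros i. unfold G. apply costL_nonneg; auto. apply Forall_forall.
    intros y Hy. apply in_map_iff in Hy. destruct Hy as [x [<- Hx]].
    specialize (Ha' x Hx). specialize (HTpos i). unfold Rmin; destruct (Rle_dec (T i) x); lra. }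
  assert (HG1 : forall i, G i <= 1).
  { intros i. apply Rle_trans with (costL phi 1 a); auto.
    unfold G. rewrite <- (map_id a) at 2. apply costL_map_mono; auto.
    intros x Hx. specialize (Ha' x Hx). specialize (HTpos i).
    unfold Rmin; destruct (Rle_dec (T i) x); lra. }
  assert (HC : forall i, PhiSum phi (N i) (T i) <= 1).
  { intros i. unfold N. rewrite <- PS_PhiSum. eapply Rle_trans; [|exact Hcost].
    apply lem_C1; auto. left; apply HTpos. }
  assert (HNT : forall i, INR (N i) * Rpower (T i) p <= Kp).
  { intros i. destruct (N i) as [|Ni] eqn:EN.
    - simpl. lra.
    - assert (HN1 : (1 <= S Ni)%nat) by lia.
      destruct (PhiInv_spec phi H (S Ni) HN1) as [Hbpos Hbeq].
      set (b := PhiInv phi (S Ni) 1) in *.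
      assert (HTb : T i <= b).
      { destruct (Rle_dec (T i) b) as [|Hn]; auto. exfalso.
        assert (h := PhiSum_superlin phi H (S Ni) b (T i / b) ltac:(lra)).
        assert (1 <= T i / b).
        { apply Rmult_le_reg_r with b; auto. field_simplify; lra. }
        specialize (h H0). replace (T i / b * b) with (T i) in h by (field; lra).
        specialize (HC i). rewrite EN in HC. rewrite Hbeq in h.
        assert (1 < T i / b).
        { apply Rmult_lt_reg_r with b; auto. field_simplify; lra. }
        lra. }
      specialize (Hb (S Ni) ltac:(specialize (HNn i); rewrite EN in HNn; lia)).
      fold b in Hb.
      set (q := Rpower (INR (S Ni)) (1 / p)) in *.
      assert (Hq : 0 < q) by apply Rpower_pos.
      assert (q * T i <= K) by nra.
      assert (Rpower (q * T i) p <= Rpower K p).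
      { apply Rle_Rpower_l; try lra. split; auto. apply Rmult_lt_0_compat; auto. }
      rewrite <- Rpower_mult_distr in H1 by auto.
      unfold q in H1. rewrite Rpower_INR_inv in H1 by (auto; lra). auto. }
  set (Q := fun j => Kp <= INR n * Rpower (T j) p).
  assert (F3 : forall i, Q (S i) ->
     INR (N i) * Rpower (T (S i)) p <= 2 * Kp * PhiSum phi (N i) (T (S i))).
  { intros i HQ. destruct (N i) as [|Ni] eqn:EN.
    - simpl. lra.
    - rewrite <- EN. apply (LB phi H p K n); [lra|lra|exact Hb|rewrite EN; lia|apply HNn|apply HTpos| |exact HQ].
      specialize (HNT i). rewrite HTp.
        assert (0 < Rpower (T i) p) by apply Rpower_pos.
        assert (0 <= INR (N i)) by apply pos_INR.
        apply Rle_trans with (INR (N i) * Rpower (T i) p); auto.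
        apply Rmult_le_compat_l; auto.
        apply Rmult_le_reg_r with c2. lra. field_simplify; nra. }
  assert (F2 : forall i, P i <= P (S i) + INR (N (S i)) * Rpower (T i) p).
  { intros i. unfold P, N. rewrite <- rpow_pos_eq by auto. rewrite HTS.
    apply lem_S2; auto; lra. }
  assert (Step : forall i, Q (S (S i)) ->
     P i <= P (S i) + 2 * (c2 * c2) * Kp * (G (S i) - G (S (S i)))).
  { intros i HQ. specialize (F2 i). specialize (F3 (S i) HQ). specialize (F1 (S i)).
    rewrite HTp in F3. rewrite HTp in F3.
    assert (0 <= INR (N (S i))) by apply pos_INR.
    assert (0 < Rpower (T i) p) by apply Rpower_pos.
    assert (E : INR (N (S i)) * Rpower (T i) p =
              c2 * c2 * (INR (N (S i)) * (Rpower (T i) p / c2 / c2))) by (field; lra).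
    assert (INR (N (S i)) * Rpower (T i) p <= c2 * c2 * (2 * Kp * PhiSum phi (N (S i)) (T (S (S i))))).
    { rewrite E. apply Rmult_le_compat_l; nra. }
    assert (0 < c2 * c2) by nra.
    assert (2 * (c2 * c2) * Kp * PhiSum phi (N (S i)) (T (S (S i))) <=
            2 * (c2 * c2) * Kp * (G (S i) - G (S (S i)))).
    { apply Rmult_le_compat_l. nra. lra. }
    lra. }
  assert (Tel : forall L, (forall j, (j < L)%nat -> Q (S (S j))) ->
     P 0%nat <= P L + 2 * (c2 * c2) * Kp * (G 1%nat - G (S L))).
  { induction L; intros HL.
    - lra.
    - specialize (IHL (fun j Hj => HL j ltac:(lia))).
      specialize (Step L (HL L ltac:(lia))). lra. }
  assert (Hex : exists j, ~ Q (S (S j))).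
  { destruct (exists_pow2_gt (INR n * Rpower T0 p / Kp)) as [j Hj].
    exists j. unfold Q. intros HQ.
    assert (Hform : forall i, Rpower (T i) p = Rpower T0 p / c2 ^ i).
    { induction i. unfold T. simpl. rewrite Rdiv_1_r. field.
      rewrite HTp, IHi. simpl. field. assert (0 < c2 ^ i) by (apply pow_lt; lra). split; lra. }
    rewrite Hform in HQ.
    assert (2 ^ j <= c2 ^ S (S j)).
    { apply Rle_trans with (c2 ^ j). apply pow_incr; lra.
      apply Rle_pow; [lra|lia]. }
    assert (0 < 2 ^ j) by (apply pow_lt; lra).
    assert (0 < c2 ^ S (S j)) by (apply pow_lt; lra).
    assert (0 < Rpower T0 p) by apply Rpower_pos.
    assert (INR n * Rpower T0 p < Kp * 2 ^ j).
    { apply Rmult_lt_reg_r with (/ Kp). apply Rinv_0_lt_compat; auto.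
      replace (Kp * 2 ^ j * / Kp) with (2 ^ j) by (field; lra). auto. }
    assert (Kp * c2 ^ S (S j) <= INR n * Rpower T0 p).
    { apply Rmult_le_reg_r with (/ c2 ^ S (S j)). apply Rinv_0_lt_compat; auto.
      replace (Kp * c2 ^ S (S j) * / c2 ^ S (S j)) with Kp by (field; lra). lra. }
    nra. }
  destruct (first_fail (fun j => Q (S (S j))) Hex) as [L [HnQ HQL]].
  specialize (Tel L HQL).
  assert (HP0 : P 0%nat = powL p a).
  { unfold P. rewrite map_Rmin_id; auto. intros x Hx. unfold T. simpl. rewrite Rdiv_1_r.
    unfold T0. assert (x <= fold_right Rmax 0 a) by (apply fold_Rmax_ge; auto). lra. }
  assert (HPL : P L <= INR n * Rpower (T L) p).
  { unfold P. rewrite <- rpow_pos_eq by auto. rewrite <- Hlen.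
    rewrite <- (length_map (Rmin (T L)) a). apply powL_bound. lra.
    intros y Hy. apply in_map_iff in Hy. destruct Hy as [x [<- Hx]].
    specialize (Ha' x Hx). specialize (HTpos L).
    unfold Rmin; destruct (Rle_dec (T L) x); lra. }
  unfold Q in HnQ. rewrite !HTp in HnQ.
  assert (0 < Rpower (T L) p) by apply Rpower_pos.
  assert (HnL : INR n * Rpower (T L) p < c2 * c2 * Kp).
  { assert (E : INR n * (Rpower (T L) p / c2 / c2) * (c2 * c2) = INR n * Rpower (T L) p)
      by (field; lra).
    assert (0 < c2 * c2) by nra. nra. }
  specialize (HG1 1%nat). specialize (HG0 (S L)).
  assert (0 < c2 * c2) by nra.
  rewrite HP0 in Tel.
  assert (2 * (c2 * c2) * Kp * (G 1%nat - G (S L)) <= 2 * (c2 * c2) * Kp * 1).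
  { apply Rmult_le_compat_l. nra. lra. }
  lra.
Qed.

Fixpoint ins (k : R * R -> R) (x : R * R) (l : list (R * R)) : list (R * R) :=
  match l with
  | nil => x :: nil
  | y :: l' => if Rle_dec (k y) (k x) then x :: l else y :: ins k x l'
  end.
Fixpoint isort (k : R * R -> R) (l : list (R * R)) : list (R * R) :=
  match l with nil => nil | x :: l' => ins k x (isort k l') end.

Lemma ins_perm k x l : Permutation (x :: l) (ins k x l).
Proof.
  induction l; simpl. auto.
  destruct (Rle_dec (k a) (k x)). auto.
  eapply perm_trans. apply perm_swap. auto.
Qed.

Lemma isort_perm k l : Permutation l (isort k l).
Proof.
  induction l; simpl. auto.
  eapply perm_trans. apply perm_skip, IHl. apply ins_perm.
Qed.

Lemma ins_sorted k x l : Sd (map k l) -> Sd (map k (ins k x l)).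
Proof.
  induction l; simpl; intros Hs.
  - constructor; constructor.
  - apply StronglySorted_inv in Hs. destruct Hs as [Hs Hf].
    destruct (Rle_dec (k a) (k x)) as [Hle|Hlt].
    + simpl. apply SSorted_cons. apply SSorted_cons; auto.
      apply Forall_cons. exact Hle.
      rewrite Forall_forall in *. intros y Hy. specialize (Hf y Hy). lra.
    + simpl. apply SSorted_cons. apply IHl; exact Hs.
      rewrite Forall_forall in *. intros y Hy. apply in_map_iff in Hy.
      destruct Hy as [z [<- Hz]].
      apply (Permutation_in z (Permutation_sym (ins_perm k x l))) in Hz.
      destruct Hz as [<-|Hz]. lra. apply Hf. apply in_map; auto.
Qed.

Lemma isort_sorted k l : Sd (map k (isort k l)).
Proof. induction l; simpl. constructor. apply ins_sorted; auto. Qed.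

Lemma nonoverlapping_perm I J : nonoverlapping I -> Permutation I J -> nonoverlapping J.
Proof.
  intros [HF Hp] HP. split.
  - rewrite Forall_forall in *. intros x Hx. apply HF.
    apply Permutation_in with J; auto. apply Permutation_sym; auto.
  - apply (Permutation_nth I J (0,0)) in HP. destruct HP as [Hlen [f [Hbf [Hinj Hnth]]]].
    intros i j Hi Hj Hij. rewrite Hlen in Hi, Hj.
    rewrite !Hnth by auto. apply Hp; auto.
Qed.

Lemma PhiVarSum_costL phi g I : forall j0,
  PhiVarSum phi g j0 I = costL phi j0 (map (fun ab => Rabs (incr g ab)) I).
Proof. induction I; intros j0; simpl; auto. rewrite IHI. auto. Qed.

Lemma powL_perm p l l' : Permutation l l' -> powL p l = powL p l'.
Proof.
  intros HP. unfold powL. induction HP; simpl; auto; lra.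
Qed.

Lemma powL_scale p lam l : 0 <= lam -> List.Forall (fun x => 0 <= x) l ->
  powL p (map (fun x => lam * x) l) = rpow lam p * powL p l.
Proof.
  intros Hl. induction l; intros Hf; unfold powL in *; simpl. ring.
  inversion Hf; subst. rewrite IHl by auto. rewrite rpow_mult by auto. ring.
Qed.

Lemma powL_nonneg p l : 0 <= powL p l.
Proof.
  unfold powL. induction l; simpl. lra. assert (0 <= rpow a p) by apply rpow_nonneg. lra.
Qed.

Lemma costL_scale phi (H : is_Phi_sequence phi) t l : forall j0, (1 <= j0)%nat ->
  0 <= t <= 1 -> List.Forall (fun x => 0 <= x) l ->
  costL phi j0 (map (fun x => t * x) l) <= t * costL phi j0 l.
Proof.
  induction l; intros j0 Hj Ht Hf; simpl. lra.
  inversion Hf; subst.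
  assert (phi j0 (t * a) <= t * phi j0 a) by (apply phi_scale; auto).
  assert (costL phi (S j0) (map (fun x => t * x) l) <= t * costL phi (S j0) l) by (apply IHl; auto).
  lra.
Qed.

Lemma Sd_scale t l : 0 <= t -> Sd l -> Sd (map (fun x => t * x) l).
Proof.
  intros Ht. induction l; simpl; intros Hs. constructor.
  apply StronglySorted_inv in Hs. destruct Hs as [Hs Hf]. apply SSorted_cons. apply IHl; exact Hs.
  rewrite Forall_forall in *. intros y Hy. apply in_map_iff in Hy.
  destruct Hy as [z [<- Hz]]. specialize (Hf z Hz). nra.
Qed.

Lemma maxterm_ge phi p n k : (1 <= k <= n)%nat ->
  Rpower (INR k) (1 / p) * PhiInv phi k 1 <= maxterm phi p n.
Proof.
  intros Hk. unfold maxterm. apply fold_Rmax_ge. apply in_map_iff. exists k.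
  split; auto. apply in_seq. lia.
Qed.

Lemma single_nonoverlapping a b : 0 <= a -> a <= b -> b <= 1 -> nonoverlapping ((a, b) :: nil).
Proof.
  intros. split. constructor; [unfold interval_in01; simpl; lra|constructor].
  intros i j Hi Hj Hij. simpl in Hi, Hj. lia.
Qed.

Lemma incr_scale c f ab : incr (fun x => c * f x) ab = c * incr f ab.
Proof. unfold incr. ring. Qed.

Lemma sufficiency phi (H : is_Phi_sequence phi) nu p :
  modulus_of_variation nu -> 1 <= p ->
  (exists B, forall n, (1 <= n)%nat -> maxterm phi p n <= B * nu n) ->
  forall f, PhiBV phi f -> Vp p nu f.
Proof.
  intros Hnu Hp [B HB] f [c [Hc [M0 HM0]]].
  destruct Hnu as [Hnupos [Hnumon _]].
  set (g := fun x => c * f x) in *.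
  set (V := Rmax 1 M0).
  assert (HV1 : 1 <= V) by apply Rmax_l.
  assert (HVM : M0 <= V) by apply Rmax_r.
  destruct (PhiInv_spec phi H 1 (le_n 1)) as [Hb1 Hb1eq].
  simpl in Hb1eq. rewrite Rplus_0_l in Hb1eq.
  split.
  -
    exists ((Rabs (g 0) + V * PhiInv phi 1 1) / c).
    intros x Hx.
    assert (Hv := HM0 ((0, x) :: nil) (single_nonoverlapping 0 x ltac:(lra) ltac:(lra) ltac:(lra))).
    simpl in Hv. unfold incr in Hv; simpl in Hv.
    set (y := Rabs (g x - g 0)) in *.
    assert (Hy : y <= V * PhiInv phi 1 1).
    { destruct (Rle_dec y (V * PhiInv phi 1 1)) as [|Hn]; auto. exfalso.
      assert (h := phi_superlin phi H 1 (PhiInv phi 1 1) (y / PhiInv phi 1 1) (le_n 1) ltac:(lra)).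
      assert (1 <= y / PhiInv phi 1 1).
      { apply Rmult_le_reg_r with (PhiInv phi 1 1); auto. field_simplify; nra. }
      specialize (h H0). replace (y / PhiInv phi 1 1 * PhiInv phi 1 1) with y in h by (field; lra).
      rewrite Hb1eq in h.
      assert (V < y / PhiInv phi 1 1).
      { apply Rmult_lt_reg_r with (PhiInv phi 1 1); auto. field_simplify; lra. }
      lra. }
    assert (Rabs (g x) <= Rabs (g 0) + V * PhiInv phi 1 1).
    { unfold y in Hy. assert (h := Rabs_triang (g x - g 0) (g 0)).
      replace (g x - g 0 + g 0) with (g x) in h by ring. lra. }
    unfold g in H0. rewrite Rabs_mult, (Rabs_right c) in H0 by lra.
    apply Rmult_le_reg_l with c; auto. replace (c * ((Rabs (g 0) + V * PhiInv phi 1 1) / c)) with (Rabs (g 0) + V * PhiInv phi 1 1) by (field; lra). unfold g; lra.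
  -
    set (B1 := Rmax B 1).
    assert (HB1 : 0 < B1) by (unfold B1; assert (h := Rmax_r B 1); lra).
    set (c2 := Rpower 2 p).
    set (A := 3 * (c2 * c2)).
    exists (V / c * rpow A (1 / p) * B1).
    intros n Hn I HI Hlen.
    set (key := fun ab => Rabs (incr g ab)).
    set (J := isort key I).
    assert (HPJ : Permutation I J) by apply isort_perm.
    assert (HJ : nonoverlapping J) by (apply nonoverlapping_perm with I; auto).
    set (a := map key J).
    set (a' := map (fun x => / V * x) a).
    set (K := B1 * nu n).
    assert (HnuN : 0 < nu n) by auto.
    assert (HK : 0 < K) by (unfold K; nra).
    assert (Hnonneg : List.Forall (fun x => 0 <= x) a).
    { apply Forall_forall. intros y Hy. unfold a in Hy. apply in_map_iff in Hy.
      destruct Hy as [z [<- _]]. unfold key. apply Rabs_pos. }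
    assert (Hnonneg' : List.Forall (fun x => 0 <= x) a').
    { apply Forall_forall. intros y Hy. unfold a' in Hy. apply in_map_iff in Hy.
      destruct Hy as [z [<- Hz]]. rewrite Forall_forall in Hnonneg. specialize (Hnonneg z Hz).
      assert (0 < / V) by (apply Rinv_0_lt_compat; lra). nra. }
    assert (Hcore : powL p a' <= A * Rpower K p).
    { apply (core phi H p K n a'); auto.
      - intros k Hk. apply Rle_trans with (maxterm phi p n). apply maxterm_ge; auto.
        unfold K. apply Rle_trans with (B * nu n). apply HB; auto.
        apply Rmult_le_compat_r. lra. apply Rmax_l.
      - unfold a', a, J. rewrite !length_map. rewrite <- (Permutation_length (isort_perm key I)). auto.
      - apply Sd_scale. left; apply Rinv_0_lt_compat; lra. apply isort_sorted.
      - apply Rle_trans with (/ V * costL phi 1 a).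
        apply costL_scale; auto. split. left; apply Rinv_0_lt_compat; lra.
        rewrite <- Rinv_1. apply Rinv_le_contravar; lra.
        assert (costL phi 1 a <= V).
        { assert (E: costL phi 1 a = PhiVarSum phi g 1 J) by (rewrite PhiVarSum_costL; reflexivity).
          rewrite E. apply Rle_trans with M0; auto. }
        apply Rmult_le_reg_l with V. lra. rewrite <- Rmult_assoc, Rinv_r by lra. lra. }
    assert (Hkeyf : map (fun ab => Rabs (incr f ab)) J = map (fun x => V / c * x) a').
    { unfold a', a. rewrite !map_map. apply map_ext. intros ab. unfold key, g.
      rewrite incr_scale, Rabs_mult, (Rabs_right c) by lra. field. split; lra. }
    assert (HpS : pSum p f I = rpow (rpow (V / c) p * powL p a') (1 / p)).
    { unfold pSum. f_equal.
      rewrite <- powL_scale. rewrite <- Hkeyf.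
      rewrite (powL_perm p _ (map (fun ab => Rabs (incr f ab)) I)).
      unfold powL. rewrite map_map. auto.
      apply Permutation_map. apply Permutation_sym; auto.
      apply Rlt_le, Rdiv_lt_0_compat; lra. auto. }
    assert (Hp1 : 0 < 1 / p) by (apply Rdiv_lt_0_compat; lra).
    assert (HVc : 0 < V / c) by (apply Rdiv_lt_0_compat; lra).
    assert (HpSb : pSum p f I <= V / c * rpow A (1 / p) * K).
    { rewrite HpS.
      apply Rle_trans with (rpow (rpow (V / c) p * (A * Rpower K p)) (1 / p)).
      - apply rpow_le; auto.
        apply Rmult_le_pos. apply rpow_nonneg. apply powL_nonneg.
        apply Rmult_le_compat_l. apply rpow_nonneg. auto.
      - assert (HA : 0 < A) by (unfold A, c2; assert (h := Rpower_pos 2 p); nra).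
        rewrite rpow_mult by (try apply rpow_nonneg; assert (h := Rpower_pos K p); nra).
        rewrite rpow_inv by lra.
        rewrite rpow_mult by (try lra; assert (h := Rpower_pos K p); lra).
        rewrite <- (rpow_pos_eq K p) by auto. rewrite rpow_inv by lra. lra. }
    apply Rmult_le_reg_r with (nu n); auto.
    unfold Rdiv at 1. rewrite Rmult_assoc, Rinv_l, Rmult_1_r by lra.
    unfold K in HpSb. lra.
Qed.

Fixpoint countb (P : nat -> bool) (n : nat) : nat :=
  match n with O => O | S n' => (countb P n' + (if P n' then 1 else 0))%nat end.

Lemma countb_filter P n : countb P n = length (filter P (seq 0 n)).
Proof.
  induction n. reflexivity. cbn [countb]. rewrite seq_S, filter_app, length_app. simpl.
  rewrite IHn. destruct (P n); simpl; lia.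
Qed.

Lemma countb_le P n : (countb P n <= n)%nat.
Proof. induction n; simpl; auto. destruct (P n); lia. Qed.

Lemma countb_inj P (g : nat -> nat) m n :
  (forall t, (t < n)%nat -> P t = true -> (g t < m)%nat) ->
  (forall t t', (t < n)%nat -> (t' < n)%nat -> P t = true -> P t' = true -> g t = g t' -> t = t') ->
  (countb P n <= m)%nat.
Proof.
  intros Hb Hi. rewrite countb_filter.
  rewrite <- (length_map g). rewrite <- (length_seq m 0).
  apply NoDup_incl_length.
  - apply NoDup_map_NoDup_ForallPairs.
    + intros x y Hx Hy E. apply filter_In in Hx. apply filter_In in Hy.
      destruct Hx as [Hx Px]. destruct Hy as [Hy Py]. apply in_seq in Hx. apply in_seq in Hy.
      apply Hi; auto; lia.
    + apply NoDup_filter, seq_NoDup.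
  - intros y Hy. apply in_map_iff in Hy. destruct Hy as [x [<- Hx]].
    apply filter_In in Hx. destruct Hx as [Hx Px]. apply in_seq in Hx.
    apply in_seq. specialize (Hb x ltac:(lia) Px). lia.
Qed.

Fixpoint sumT (phi : nat -> R -> R) (w : nat -> R) (n : nat) : R :=
  match n with O => 0 | S n' => sumT phi w n' + phi (S n') (w n') end.

Definition inblk (blk : nat -> option nat) (i : nat) (t : nat) : bool :=
  match blk t with Some j => Nat.eqb j i | None => false end.

Fixpoint sumB (phi : nat -> R -> R) (blk : nat -> option nat) (h : nat -> R) (n B : nat) : R :=
  match B with O => 0 | S B' => sumB phi blk h n B' + PhiSum phi (countb (inblk blk B') n) (h B') end.

Lemma sumB_step phi blk h n B :
  sumB phi blk h (S n) B = sumB phi blk h n B +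
    match blk n with
    | Some i => if Nat.ltb i B then phi (S (countb (inblk blk i) n)) (h i) else 0
    | None => 0 end.
Proof.
  induction B. simpl. destruct (blk n); lra.
  cbn [sumB]. rewrite IHB. cbn [countb].
  destruct (blk n) as [i|] eqn:E.
  - assert (E2 : inblk blk B n = Nat.eqb i B) by (unfold inblk; rewrite E; auto).
    rewrite E2. destruct (Nat.eqb_spec i B).
    + subst. rewrite Nat.ltb_irrefl. replace (Nat.ltb B (S B)) with true by (symmetry; apply Nat.ltb_lt; lia).
      rewrite Nat.add_1_r. simpl. lra.
    + rewrite Nat.add_0_r.
      destruct (Nat.ltb_spec i B); destruct (Nat.ltb_spec i (S B)); try lia; lra.
  - assert (E2 : inblk blk B n = false) by (unfold inblk; rewrite E; auto).
    rewrite E2, Nat.add_0_r. lra.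
Qed.

Lemma abstract_bound phi (H : is_Phi_sequence phi) (w : nat -> R) blk h B n :
  (forall i, 0 <= h i) ->
  (forall t, (t < n)%nat -> blk t = None -> w t = 0) ->
  (forall t i, (t < n)%nat -> blk t = Some i -> 0 <= w t <= h i /\ (i < B)%nat) ->
  sumT phi w n <= sumB phi blk h n B.
Proof.
  intros Hh Hnone Hsome. induction n.
  - simpl. clear Hsome Hnone. induction B. simpl; lra. cbn [sumB countb]. simpl. lra.
  - simpl. rewrite sumB_step.
    assert (IH := IHn (fun t Ht => Hnone t ltac:(lia)) (fun t i Ht => Hsome t i ltac:(lia))).
    destruct (blk n) as [i|] eqn:E.
    + destruct (Hsome n i ltac:(lia) E) as [[Hw0 Hwh] HiB].
      replace (Nat.ltb i B) with true by (symmetry; apply Nat.ltb_lt; auto).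
      assert (phi (S n) (w n) <= phi (S n) (h i)) by (apply phi_mono; auto; lia).
      assert (phi (S n) (h i) <= phi (S (countb (inblk blk i) n)) (h i)).
      { apply phi_index_dec; auto. lia. assert (h' := countb_le (inblk blk i) n). lia. }
      lra.
    + rewrite (Hnone n ltac:(lia) E).
      destruct (phi_props phi H (S n) ltac:(lia)) as [_ [_ H0]]. rewrite H0. lra.
Qed.

Lemma sumB_bound phi blk h n B (C : nat -> R) :
  (forall i, PhiSum phi (countb (inblk blk i) n) (h i) <= C i) ->
  sumB phi blk h n B <= fold_right Rplus 0 (map C (seq 0 B)).
Proof.
  intros HC. induction B. simpl. lra. cbn [sumB].
  rewrite seq_S, map_app, fold_right_app. simpl.
  assert (forall l a, fold_right Rplus a l = fold_right Rplus 0 l + a).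
  { induction l; intros; simpl; try rewrite IHl; lra. }
  rewrite H. specialize (HC B). lra.
Qed.

Lemma geom_sum B : fold_right Rplus 0 (map (fun i => 2 / 2 ^ i) (seq 0 B)) = 4 - 4 / 2 ^ B.
Proof.
  induction B. simpl. field.
  rewrite seq_S, map_app, fold_right_app. simpl.
  assert (forall l a, fold_right Rplus a l = fold_right Rplus 0 l + a).
  { induction l; intros; simpl; try rewrite IHl; lra. }
  rewrite H, IHB. field. apply pow_nonzero; lra.
Qed.

Lemma PhiVarSum_app phi f I x : forall j0,
  PhiVarSum phi f j0 (I ++ x :: nil) = PhiVarSum phi f j0 I + phi (j0 + length I)%nat (Rabs (incr f x)).
Proof.
  induction I; intros j0; simpl. rewrite Nat.add_0_r. lra.
  rewrite IHI. replace (S j0 + length I)%nat with (j0 + S (length I))%nat by lia. lra.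
Qed.

Lemma sumT_ext phi w w' n : (forall t, (t < n)%nat -> w t = w' t) -> sumT phi w n = sumT phi w' n.
Proof.
  induction n; intros Hw; simpl; auto. rewrite IHn by (intros; apply Hw; lia).
  rewrite Hw by lia. auto.
Qed.

Lemma PhiVarSum_sumT phi f I :
  PhiVarSum phi f 1 I = sumT phi (fun t => Rabs (incr f (nth t I (0,0)))) (length I).
Proof.
  induction I using rev_ind. simpl. auto.
  rewrite PhiVarSum_app, IHI. rewrite length_app. simpl. rewrite Nat.add_1_r. simpl.
  rewrite app_nth2 by lia. rewrite Nat.sub_diag. simpl. f_equal.
  apply sumT_ext. intros t Ht. rewrite app_nth1 by auto. auto.
Qed.

Definition hh (phi : nat -> R -> R) (k : nat -> nat) (i : nat) : R := PhiInv phi (k i) 1 / 2 ^ i.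
Definition xs (k : nat -> nat) (i s : nat) : R := (1 + (INR s + 1) / (INR (k i) + 1)) / 2 ^ (S i).
Definition ms (k : nat -> nat) (i s : nat) : R := (1 + (INR s + / 2) / (INR (k i) + 1)) / 2 ^ (S i).
Definition IsSpike (k : nat -> nat) (x : R) (i s : nat) : Prop := (s < k i)%nat /\ x = xs k i s.

Definition spikeOf (k : nat -> nat) (x : R) : option (nat * nat) :=
  match excluded_middle_informative (exists q : nat * nat, IsSpike k x (fst q) (snd q)) with
  | left e => Some (proj1_sig (constructive_indefinite_description _ e))
  | right _ => None
  end.

Definition fsp (phi : nat -> R -> R) (k : nat -> nat) (x : R) : R :=
  match spikeOf k x with Some (i, s) => hh phi k i | None => 0 end.

Lemma inrange_unique i i' y :
  / 2 ^ (S i) < y < / 2 ^ i -> / 2 ^ (S i') < y < / 2 ^ i' -> i = i'.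
Proof.
  intros H1 H2.
  assert (Hw : forall a b, (S a <= b)%nat -> / 2 ^ b <= / 2 ^ (S a)).
  { intros a b Hab. apply Rinv_le_contravar. apply pow_lt; lra. apply Rle_pow; lra || lia. }
  destruct (lt_eq_lt_dec i i') as [[Hlt|Heq]|Hgt]; auto.
  - specialize (Hw i i' Hlt). lra.
  - specialize (Hw i' i Hgt). lra.
Qed.

Lemma frac_range s K : (s < K)%nat -> 0 < (INR s + 1) / (INR K + 1) < 1.
Proof.
  intros Hs. assert (INR s + 1 <= INR K) by (rewrite <- S_INR; apply le_INR; lia).
  assert (0 <= INR s) by apply pos_INR.
  split. apply Rdiv_lt_0_compat; lra.
  apply Rmult_lt_reg_r with (INR K + 1). lra. field_simplify; lra.
Qed.

Lemma frac_range' s K : (s < K)%nat -> 0 < (INR s + / 2) / (INR K + 1) < 1.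
Proof.
  intros Hs. assert (INR s + 1 <= INR K) by (rewrite <- S_INR; apply le_INR; lia).
  assert (0 <= INR s) by apply pos_INR.
  split. apply Rdiv_lt_0_compat; lra.
  apply Rmult_lt_reg_r with (INR K + 1). lra. field_simplify; lra.
Qed.

Lemma gen_range i u : 0 < u < 1 -> / 2 ^ (S i) < (1 + u) / 2 ^ (S i) < / 2 ^ i.
Proof.
  intros Hu. assert (A : 0 < 2 ^ i) by (apply pow_lt; lra).
  change (2 ^ S i) with (2 * 2 ^ i).
  assert (E1 : (1 + u) / (2 * 2 ^ i) - / (2 * 2 ^ i) = u / (2 * 2 ^ i)) by (field; lra).
  assert (E2 : / 2 ^ i - (1 + u) / (2 * 2 ^ i) = (1 - u) / (2 * 2 ^ i)) by (field; lra).
  assert (0 < u / (2 * 2 ^ i)) by (apply Rdiv_lt_0_compat; lra).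
  assert (0 < (1 - u) / (2 * 2 ^ i)) by (apply Rdiv_lt_0_compat; lra).
  lra.
Qed.

Lemma xs_range k i s : (s < k i)%nat -> / 2 ^ (S i) < xs k i s < / 2 ^ i.
Proof. intros Hs. apply gen_range, frac_range; auto. Qed.

Lemma ms_range k i s : (s < k i)%nat -> / 2 ^ (S i) < ms k i s < / 2 ^ i.
Proof. intros Hs. apply gen_range, frac_range'; auto. Qed.

Lemma spike_unique k x i s i' s' : IsSpike k x i s -> IsSpike k x i' s' -> i = i' /\ s = s'.
Proof.
  intros [Hs Ex] [Hs' Ex'].
  assert (Hi : i = i').
  { apply inrange_unique with x. rewrite Ex; apply xs_range; auto. rewrite Ex'; apply xs_range; auto. }
  subst i'. split; auto. rewrite Ex in Ex'. unfold xs in Ex'.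
  assert (0 < 2 ^ S i) by (apply pow_lt; lra).
  assert (0 < INR (k i) + 1) by (assert (h := pos_INR (k i)); lra).
  assert (INR s = INR s').
  { apply Rmult_eq_reg_r with (/ (INR (k i) + 1)). 2: apply Rinv_neq_0_compat; lra.
    apply Rmult_eq_reg_r with (/ 2 ^ S i). 2: apply Rinv_neq_0_compat; lra.
    assert (E := Ex'). unfold Rdiv in E. nra. }
  apply INR_eq; auto.
Qed.

Lemma spikeOf_some k x i s : spikeOf k x = Some (i, s) -> IsSpike k x i s.
Proof.
  unfold spikeOf. destruct (excluded_middle_informative _) as [e|n]; [|discriminate].
  destruct (constructive_indefinite_description _ e) as [[i0 s0] Hq]. simpl.
  intros E; inversion E; subst. auto.
Qed.

Lemma spikeOf_none k x : spikeOf k x = None -> forall i s, ~ IsSpike k x i s.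
Proof.
  unfold spikeOf. destruct (excluded_middle_informative _) as [e|n]; [discriminate|].
  intros _ i s Hsp. apply n. exists (i, s). auto.
Qed.

Lemma spikeOf_spike k x i s : IsSpike k x i s -> spikeOf k x = Some (i, s).
Proof.
  intros Hsp. destruct (spikeOf k x) as [[i0 s0]|] eqn:E.
  - apply spikeOf_some in E. destruct (spike_unique k x i s i0 s0 Hsp E). subst; auto.
  - exfalso. apply (spikeOf_none k x E i s Hsp).
Qed.

Lemma fsp_spike phi k x i s : IsSpike k x i s -> fsp phi k x = hh phi k i.
Proof. intros Hsp. unfold fsp. rewrite (spikeOf_spike k x i s Hsp). auto. Qed.

Lemma hh_pos phi (H : is_Phi_sequence phi) k i : (1 <= k i)%nat -> 0 < hh phi k i.
Proof.
  intros Hk. unfold hh. destruct (PhiInv_spec phi H (k i) Hk).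
  apply Rdiv_lt_0_compat; auto. apply pow_lt; lra.
Qed.

Lemma fsp_nonneg phi (H : is_Phi_sequence phi) k x : (forall i, (1 <= k i)%nat) -> 0 <= fsp phi k x.
Proof.
  intros Hk. unfold fsp. destruct (spikeOf k x) as [[i s]|]. left; apply hh_pos; auto. lra.
Qed.

Lemma ms_not_spike k i s : (s < k i)%nat -> forall i' s', ~ IsSpike k (ms k i s) i' s'.
Proof.
  intros Hs i' s' [Hs' E].
  assert (Hi : i = i').
  { apply inrange_unique with (ms k i s). apply ms_range; auto. rewrite E; apply xs_range; auto. }
  subst i'. unfold ms, xs in E.
  assert (0 < 2 ^ S i) by (apply pow_lt; lra).
  assert (0 < INR (k i) + 1) by (assert (h := pos_INR (k i)); lra).
  assert (INR s + / 2 = INR s' + 1).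
  { apply Rmult_eq_reg_r with (/ (INR (k i) + 1)). 2: apply Rinv_neq_0_compat; lra.
    apply Rmult_eq_reg_r with (/ 2 ^ S i). 2: apply Rinv_neq_0_compat; lra.
    unfold Rdiv in E. nra. }
  assert (INR (2 * s + 1) = INR (2 * s' + 2)).
  { rewrite !plus_INR, !mult_INR. simpl. lra. }
  apply INR_eq in H2. lia.
Qed.

Lemma fsp_ms phi k i s : (s < k i)%nat -> fsp phi k (ms k i s) = 0.
Proof.
  intros Hs. unfold fsp. destruct (spikeOf k (ms k i s)) as [[i0 s0]|] eqn:E; auto.
  apply spikeOf_some in E. exfalso. apply (ms_not_spike k i s Hs i0 s0 E).
Qed.

Definition tag (phi : nat -> R -> R) (k : nat -> nat) (ab : R * R) : option (nat * nat * bool) :=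
  if Req_EM_T (fst ab) (snd ab) then None else
  match spikeOf k (snd ab), spikeOf k (fst ab) with
  | Some (i, s), Some (i', s') =>
      if Rle_dec (hh phi k i') (hh phi k i) then Some (i, s, true) else Some (i', s', false)
  | Some (i, s), None => Some (i, s, true)
  | None, Some (i', s') => Some (i', s', false)
  | None, None => None
  end.

Lemma fsp_eq phi k x : fsp phi k x = match spikeOf k x with Some (i, s) => hh phi k i | None => 0 end.
Proof. reflexivity. Qed.

Lemma tag_none phi (H : is_Phi_sequence phi) k ab : (forall i, (1 <= k i)%nat) ->
  tag phi k ab = None -> Rabs (incr (fsp phi k) ab) = 0.
Proof.
  intros Hk. unfold tag, incr. destruct (Req_EM_T (fst ab) (snd ab)) as [E|E].
  - intros _. rewrite E. unfold Rminus. rewrite Rplus_opp_r. apply Rabs_R0.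
  - rewrite !fsp_eq. destruct (spikeOf k (snd ab)) as [[i s]|]; destruct (spikeOf k (fst ab)) as [[i' s']|].
    + destruct (Rle_dec _ _); discriminate.
    + discriminate.
    + discriminate.
    + intros _. unfold Rminus. rewrite Rplus_opp_r. apply Rabs_R0.
Qed.

Lemma tag_some phi (H : is_Phi_sequence phi) k ab i s side : (forall i, (1 <= k i)%nat) ->
  tag phi k ab = Some (i, s, side) ->
  Rabs (incr (fsp phi k) ab) <= hh phi k i /\
  IsSpike k (if side then snd ab else fst ab) i s /\ fst ab <> snd ab.
Proof.
  intros Hk. unfold tag, incr. destruct (Req_EM_T (fst ab) (snd ab)) as [E|E]; [discriminate|].
  rewrite !fsp_eq.
  destruct (spikeOf k (snd ab)) as [[i1 s1]|] eqn:E1; destruct (spikeOf k (fst ab)) as [[i2 s2]|] eqn:E2.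
  - assert (h1 := hh_pos phi H k i1 (Hk i1)). assert (h2 := hh_pos phi H k i2 (Hk i2)).
    destruct (Rle_dec _ _) as [Hle|Hlt]; intros Eq; inversion Eq; subst.
    + split; [|split; auto]. apply Rabs_le. lra. apply spikeOf_some; auto.
    + split; [|split; auto]. apply Rabs_le. lra. apply spikeOf_some; auto.
  - intros Eq; inversion Eq; subst. assert (h1 := hh_pos phi H k i (Hk i)).
    split; [|split; auto]. rewrite Rminus_0_r, Rabs_right; lra. apply spikeOf_some; auto.
  - intros Eq; inversion Eq; subst. assert (h1 := hh_pos phi H k i (Hk i)).
    split; [|split; auto]. rewrite Rminus_0_l, Rabs_Ropp, Rabs_right; lra. apply spikeOf_some; auto.
  - discriminate.
Qed.

Lemma exists_blk_bound (blk : nat -> option nat) n :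
  exists B, forall t i, (t < n)%nat -> blk t = Some i -> (i < B)%nat.
Proof.
  induction n. exists 0%nat. intros; lia.
  destruct IHn as [B HB]. destruct (blk n) as [j|] eqn:E.
  - exists (Nat.max B (S j)). intros t i Ht Hb. destruct (Nat.eq_dec t n).
    + subst. rewrite E in Hb. inversion Hb. lia.
    + specialize (HB t i ltac:(lia) Hb). lia.
  - exists B. intros t i Ht Hb. destruct (Nat.eq_dec t n).
    + subst. rewrite E in Hb. discriminate.
    + apply (HB t i); auto; lia.
Qed.

Lemma fsp_var phi (H : is_Phi_sequence phi) k (Hk : forall i, (1 <= k i)%nat) I :
  nonoverlapping I -> PhiVarSum phi (fsp phi k) 1 I <= 4.
Proof.
  intros [HF HP].
  set (n := length I).
  set (tg := fun t => tag phi k (nth t I (0,0))).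
  set (blk := fun t => match tg t with Some (i, _, _) => Some i | None => None end).
  destruct (exists_blk_bound blk n) as [B HB].
  rewrite PhiVarSum_sumT. fold n.
  apply Rle_trans with (sumB phi blk (hh phi k) n B).
  { apply abstract_bound; auto.
    - intros i. left; apply hh_pos; auto.
    - intros t Ht Hb. unfold blk in Hb. destruct (tg t) as [[[i s] side]|] eqn:E; [discriminate|].
      apply tag_none; auto.
    - intros t i Ht Hb. split; [|apply (HB t i Ht Hb)].
      unfold blk in Hb. destruct (tg t) as [[[i0 s] side]|] eqn:E; [|discriminate].
      inversion Hb; subst. destruct (tag_some phi H k _ i s side Hk E) as [h1 _].
      split; auto. apply Rabs_pos. }
  apply Rle_trans with (fold_right Rplus 0 (map (fun i => 2 / 2 ^ i) (seq 0 B))).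
  2: { rewrite geom_sum. assert (0 < 4 / 2 ^ B) by (apply Rdiv_lt_0_compat; [lra|apply pow_lt; lra]). lra. }
  apply sumB_bound. intros i.
  set (c := countb (inblk blk i) n).
  assert (Hc : (c <= 2 * k i)%nat).
  { unfold c.
    apply countb_inj with (g := fun t => match tg t with
                                         | Some (_, s, side) => (2 * s + (if side then 1 else 0))%nat
                                         | None => 0%nat end).
    - intros t Ht Hin. unfold inblk, blk in Hin.
      destruct (tg t) as [[[i0 s] side]|] eqn:E; [|discriminate].
      apply Nat.eqb_eq in Hin. subst i0.
      destruct (tag_some phi H k _ i s side Hk E) as [_ [[Hs _] _]]. destruct side; lia.
    - intros t t' Ht Ht' Hin Hin' Hg. unfold inblk, blk in Hin, Hin'.
      destruct (tg t) as [[[i0 s] side]|] eqn:E; [|discriminate].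
      destruct (tg t') as [[[i1 s'] side']|] eqn:E'; [|discriminate].
      apply Nat.eqb_eq in Hin. apply Nat.eqb_eq in Hin'. subst i0 i1.
      assert (s = s' /\ side = side') as [<- <-].
      { destruct side, side'; split; lia. }
      destruct (tag_some phi H k _ i s side Hk E) as [_ [[_ Hx] Hne]].
      destruct (tag_some phi H k _ i s side Hk E') as [_ [[_ Hx'] Hne']].
      destruct (Nat.eq_dec t t') as [|Hneq]; auto. exfalso.
      specialize (HP t t' Ht Ht' Hneq). unfold nonoverlap in HP.
      rewrite Forall_forall in HF.
      assert (HI1 := HF _ (nth_In I (0,0) Ht)). assert (HI2 := HF _ (nth_In I (0,0) Ht')).
      unfold interval_in01 in HI1, HI2.
      destruct side.
      + rewrite <- Hx' in Hx. lra.
      + rewrite <- Hx' in Hx. lra. }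
  assert (Hki := Hk i).
  destruct (PhiInv_spec phi H (k i) Hki) as [Hbpos Hbeq].
  assert (Hh0 : 0 <= hh phi k i) by (left; apply hh_pos; auto).
  apply Rle_trans with (PhiSum phi (2 * k i) (hh phi k i)).
  { apply PhiSum_mono_index; auto. }
  apply Rle_trans with (2 * PhiSum phi (k i) (hh phi k i)).
  { assert (h := PhiSum_index_concave phi H (k i) (2 * k i) (hh phi k i) Hki ltac:(lia) Hh0).
    rewrite mult_INR in h. replace (INR 2) with 2 in h by (simpl; lra).
    assert (0 < INR (k i)) by (apply lt_0_INR; lia).
    apply Rmult_le_reg_l with (INR (k i)); [lra|]. lra. }
  assert (PhiSum phi (k i) (hh phi k i) <= / 2 ^ i).
  { unfold hh. unfold Rdiv. rewrite Rmult_comm.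
    assert (0 < / 2 ^ i) by (apply Rinv_0_lt_compat, pow_lt; lra).
    assert (/ 2 ^ i <= 1).
    { rewrite <- Rinv_1. apply Rinv_le_contravar. lra. apply pow_R1_Rle. lra. }
    assert (h := PhiSum_scale phi H (k i) (PhiInv phi (k i) 1) (/ 2 ^ i) ltac:(lra) ltac:(lra)).
    rewrite Hbeq in h. lra. }
  unfold Rdiv. lra.
Qed.

Lemma sum_const (c : R) (l : list nat) : fold_right Rplus 0 (map (fun _ => c) l) = INR (length l) * c.
Proof. induction l; simpl. lra. rewrite IHl. destruct (length l); simpl; lra. Qed.

Lemma frac_mono D K u v : 0 < D -> 0 < K -> u <= v -> (1 + u / K) / D <= (1 + v / K) / D.
Proof.
  intros HD HK Huv. unfold Rdiv. apply Rmult_le_compat_r. left; apply Rinv_0_lt_compat; auto.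
  assert (u * / K <= v * / K). apply Rmult_le_compat_r; auto. left; apply Rinv_0_lt_compat; auto.
  lra.
Qed.

Lemma nu_mono nu : modulus_of_variation nu -> forall a b, (1 <= a)%nat -> (a <= b)%nat -> nu a <= nu b.
Proof.
  intros [_ [Hm _]] a b Ha Hab. induction Hab. lra. specialize (Hm m ltac:(lia)). lra.
Qed.

Lemma necessity phi (H : is_Phi_sequence phi) nu p :
  modulus_of_variation nu -> 1 <= p ->
  (forall f, PhiBV phi f -> Vp p nu f) ->
  exists B, forall n, (1 <= n)%nat -> maxterm phi p n <= B * nu n.
Proof.
  intros Hnu Hp Hinc. apply NNPP. intros Hno.
  assert (Hex : forall i : nat, exists kk, (1 <= kk)%nat /\
     (2 ^ i * 2 ^ i) * nu kk < Rpower (INR kk) (1 / p) * PhiInv phi kk 1).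
  { intros i. set (B := 2 ^ i * 2 ^ i).
    assert (HB : 0 < B) by (unfold B; assert (0 < 2 ^ i) by (apply pow_lt; lra); nra).
    assert (Hn : exists n, (1 <= n)%nat /\ B * nu n < maxterm phi p n).
    { apply NNPP. intros Hn. apply Hno. exists B. intros n Hn1.
      apply Rnot_lt_le. intros Hlt. apply Hn. exists n. auto. }
    destruct Hn as [n [Hn1 Hlt]].
    assert (0 < nu n) by (apply (proj1 Hnu); auto).
    assert (Hmpos : 0 < maxterm phi p n) by nra.
    destruct (fold_Rmax_attained _ Hmpos) as [x [Hx Ex]].
    apply in_map_iff in Hx. destruct Hx as [kk [Ekk Hkk]]. apply in_seq in Hkk.
    exists kk. split. lia.
    assert (nu kk <= nu n) by (apply nu_mono; auto; lia).
    unfold maxterm in Hlt. rewrite <- Ex, <- Ekk in Hlt.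
    assert (B * nu kk <= B * nu n) by (apply Rmult_le_compat_l; lra). lra. }
  set (kf := fun i => proj1_sig (constructive_indefinite_description _ (Hex i))).
  assert (Hkf : forall i, (1 <= kf i)%nat /\
     (2 ^ i * 2 ^ i) * nu (kf i) < Rpower (INR (kf i)) (1 / p) * PhiInv phi (kf i) 1).
  { intros i. unfold kf. destruct (constructive_indefinite_description _ (Hex i)). auto. }
  assert (Hk1 : forall i, (1 <= kf i)%nat) by (intros; apply Hkf).
  set (f := fsp phi kf).
  assert (HfBV : PhiBV phi f).
  { exists 1. split. lra. exists 4. intros I HI.
    replace (fun x => 1 * f x) with f by (apply functional_extensionality; intros; ring).
    apply fsp_var; auto. }
  destruct (Hinc f HfBV) as [_ [M HM]].
  destruct (exists_pow2_gt M) as [i Hi].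
  set (n := kf i).
  set (J := map (fun s => (ms kf i s, xs kf i s)) (seq 0 n)).
  assert (HJlen : length J = n) by (unfold J; rewrite length_map, length_seq; auto).
  assert (Hnth : forall a, (a < n)%nat -> nth a J (0,0) = (ms kf i a, xs kf i a)).
  { intros a Ha. unfold J. rewrite nth_indep with (d' := (ms kf i 0, xs kf i 0)) by (rewrite length_map, length_seq; auto).
    rewrite (map_nth (fun s => (ms kf i s, xs kf i s))). rewrite seq_nth; auto. }
  assert (HK : 0 < INR (kf i) + 1) by (assert (h := pos_INR (kf i)); lra).
  assert (HD : 0 < 2 ^ S i) by (apply pow_lt; lra).
  assert (HJ : nonoverlapping J).
  { split.
    - apply Forall_forall. intros ab Hab. unfold J in Hab. apply in_map_iff in Hab.
      destruct Hab as [s [<- Hs]]. apply in_seq in Hs.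
      assert (Hs' : (s < kf i)%nat) by (unfold n in Hs; lia).
      destruct (ms_range kf i s Hs'). destruct (xs_range kf i s Hs').
      assert (0 < / 2 ^ S i) by (apply Rinv_0_lt_compat; auto).
      assert (/ 2 ^ i <= 1).
      { rewrite <- Rinv_1. apply Rinv_le_contravar. lra. apply pow_R1_Rle. lra. }
      unfold interval_in01; simpl. split; [lra|split; [|lra]].
      unfold ms, xs. apply frac_mono; auto. lra.
    - intros a b Ha Hb Hab. rewrite HJlen in Ha, Hb. rewrite !Hnth by auto.
      unfold nonoverlap; simpl.
      destruct (Nat.lt_gt_cases a b) as [[Hlt|Hgt] _]; auto.
      + left. unfold xs, ms. apply frac_mono; auto.
        assert (INR a + 1 <= INR b) by (rewrite <- S_INR; apply le_INR; lia). lra.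
      + right. unfold xs, ms. apply frac_mono; auto.
        assert (INR b + 1 <= INR a) by (rewrite <- S_INR; apply le_INR; lia). lra. }
  specialize (HM n (Hk1 i) J HJ HJlen).
  destruct (PhiInv_spec phi H n (Hk1 i)) as [Hbpos _].
  assert (Hh : 0 < hh phi kf i) by (apply hh_pos; auto).
  assert (HpS : pSum p f J = Rpower (INR n) (1 / p) * hh phi kf i).
  { unfold pSum. unfold J. rewrite map_map.
    rewrite (map_ext_in _ (fun _ => rpow (hh phi kf i) p)).
    - rewrite sum_const, length_seq.
      assert (0 < INR n) by (apply lt_0_INR; apply Hk1).
      rewrite rpow_mult by (try apply rpow_nonneg; lra).
      rewrite rpow_inv by lra. rewrite rpow_pos_eq by auto. auto.
    - intros s Hs. apply in_seq in Hs. unfold incr; simpl.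
      unfold f. rewrite (fsp_spike phi kf (xs kf i s) i s) by (split; auto; lia).
      rewrite fsp_ms by (unfold n in Hs; lia). rewrite Rminus_0_r, Rabs_right by lra. auto. }
  destruct Hnu as [Hnupos _].
  assert (Hnun : 0 < nu n) by (apply Hnupos, Hk1).
  assert (Hlt := proj2 (Hkf i)). fold n in Hlt.
  rewrite HpS in HM. unfold hh in HM.
  assert (H2i : 0 < 2 ^ i) by (apply pow_lt; lra).
  assert (Rpower (INR n) (1 / p) * (PhiInv phi n 1 / 2 ^ i) = Rpower (INR n) (1 / p) * PhiInv phi n 1 / 2 ^ i) by (field; lra).
  fold n in HM. rewrite H0 in HM.
  set (X := Rpower (INR n) (1 / p) * PhiInv phi n 1) in *.
  assert (E : X / 2 ^ i / nu n * (2 ^ i * nu n) = X) by (field; lra).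
  assert (Hpn : 0 < 2 ^ i * nu n) by (apply Rmult_lt_0_compat; auto).
  assert (2 ^ i < X / 2 ^ i / nu n).
  { apply Rmult_lt_reg_r with (2 ^ i * nu n); auto. rewrite E. lra. }
  lra.
Qed.
From Coquelicot Require Import Coquelicot.
Open Scope R_scope.


Lemma eventually_bound_all (u : nat -> R) C N :
  (forall n, (N <= n)%nat -> u n <= C) -> exists C', forall n, u n <= C'.
Proof.
  revert C. induction N; intros C HN.
  - exists C. intros n; apply HN; lia.
  - apply (IHN (Rmax C (u N))). intros n Hn. destruct (Nat.eq_dec n N).
    + subst. apply Rmax_r.
    + apply Rle_trans with C. apply HN; lia. apply Rmax_l.
Qed.

Theorem theorem6p2 (phi : nat -> R -> R) (nu : nat -> R) (p : R) :
  is_Phi_sequence phi -> modulus_of_variation nu -> 1 <= p ->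
  ((forall f : R -> R, PhiBV phi f -> Vp p nu f) <->
   Rbar_lt (LimSup_seq (crit_seq phi p nu)) p_infty).
Proof.
  intros H Hnu Hp. split.
  - intros Hinc. destruct (necessity phi H nu p Hnu Hp Hinc) as [B HB].
    assert (Hle : Rbar_le (LimSup_seq (crit_seq phi p nu)) (LimSup_seq (fun _ => B))).
    { apply LimSup_le. exists 1%nat. intros n Hn. unfold crit_seq.
      assert (0 < nu n) by (apply (proj1 Hnu); auto).
      specialize (HB n Hn).
      apply Rmult_le_reg_l with (nu n); auto.
      rewrite <- Rmult_assoc, Rinv_r, Rmult_1_l by lra. lra. }
    rewrite LimSup_seq_const in Hle.
    destruct (LimSup_seq (crit_seq phi p nu)); simpl in *; auto.
  - intros Hlt. apply sufficiency; auto.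
    destruct (ex_LimSup_seq (crit_seq phi p nu)) as [l Hl].
    rewrite (is_LimSup_seq_unique _ _ Hl) in Hlt.
    assert (Hev : exists N C, forall n, (N <= n)%nat -> crit_seq phi p nu n <= C).
    { destruct l as [l| |]; simpl in Hl, Hlt.
      - destruct (Hl (mkposreal 1 Rlt_0_1)) as [_ [N HN]]. exists N, (l + 1).
        intros n Hn. left. apply HN; auto.
      - contradiction.
      - destruct (Hl 0) as [N HN]. exists N, 0. intros n Hn. left; auto. }
    destruct Hev as [N [C HC]].
    destruct (eventually_bound_all _ C N HC) as [C' HC'].
    exists C'. intros n Hn. specialize (HC' n). unfold crit_seq in HC'.
    assert (0 < nu n) by (apply (proj1 Hnu); auto).
    apply Rmult_le_reg_l with (/ nu n). apply Rinv_0_lt_compat; auto.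
    rewrite Rmult_comm with (r1 := C'), <- Rmult_assoc, Rinv_l, Rmult_1_l by lra. lra.
Qed.
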